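(* Let $R\ge0$ and let $X$ be an $R$-rough geodesic metric space. If $X$ is strongly shortcut then every asymptotic cone of $X$ is strongly shortcut.
   Context: $X$ is $R$-rough geodesic if any $x_1,x_2$ are joined by $f\colon[0,\ell]\to X$, $\ell=d(x_1,x_2)$, $f(0)=x_1,f(\ell)=x_2$, with $|d(f(s),f(t))-|s-t||\le R$. An $R$-circle is a map $\alpha\colon S\to X$ from a Riemannian circle $S$ of length $|S|$ with $d(\alpha(p),\alpha(q))\le d_S(p,q)+R$; for $K>1$ it is $\frac1K$-almost isometric if $d(\alpha(p),\alpha(\bar p))\ge\frac1K\cdot\frac{|S|}2$ for all antipodal $p,\bar p$. An $R$-rough geodesic space is strongly shortcut if for some $K>1$ there is a bound on the lengths of its $\frac1K$-almost isometric $R$-circles (an asymptotic cone of $X$ is a geodesic space, so this applies to it with $R=0$). Asymptotic cone: for a nonprincipal ultrafilter $\mathscr U$ on $\mathbb N$, basepoints $b^{(m)}\in X$ and scalars $s^{(m)}\to\infty$, take sequences $(x_m)$ with $d(x_m,b^{(m)})/s^{(m)}$ bounded, pseudometric $\lim_{\mathscr U}d(x_m,x'_m)/s^{(m)}$, and pass to the metric quotient. *)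

(* Defs.v *)
From Stdlib Require Import Reals Lra ClassicalEpsilon.
Open Scope R_scope.

Set Implicit Arguments.

Definition is_metric (X : Type) (d : X -> X -> R) : Prop :=
  (forall x y, 0 <= d x y) /\
  (forall x y, d x y = 0 <-> x = y) /\
  (forall x y, d x y = d y x) /\
  (forall x y z, d x z <= d x y + d y z).

Definition rough_geodesic (X : Type) (d : X -> X -> R) (Rr : R) : Prop :=
  forall x1 x2 : X, exists f : R -> X,
    f 0 = x1 /\ f (d x1 x2) = x2 /\
    forall s t, 0 <= s <= d x1 x2 -> 0 <= t <= d x1 x2 ->
      Rabs (d (f s) (f t) - Rabs (s - t)) <= Rr.

(** The Riemannian circle S of length L is modelled as [0, L) with the
    intrinsic (arc-length) metric. *)
Definition on_circle (L p : R) : Prop := 0 <= p < L.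

Definition circle_dist (L p q : R) : R :=
  Rmin (Rabs (p - q)) (L - Rabs (p - q)).

Definition antipode (L p : R) : R :=
  if Rlt_dec p (L / 2) then p + L / 2 else p - L / 2.

(** alpha : S -> X is an Rr-circle (alpha only matters on [0,L)). *)
Definition is_rough_circle (X : Type) (d : X -> X -> R) (Rr L : R)
  (alpha : R -> X) : Prop :=
  forall p q, on_circle L p -> on_circle L q ->
    d (alpha p) (alpha q) <= circle_dist L p q + Rr.

Definition almost_isometric (X : Type) (d : X -> X -> R) (K L : R)
  (alpha : R -> X) : Prop :=
  forall p, on_circle L p ->
    d (alpha p) (alpha (antipode L p)) >= (1 / K) * (L / 2).

Definition strongly_shortcut (X : Type) (d : X -> X -> R) (Rr : R) : Prop :=
  exists K : R, 1 < K /\ exists M : R,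
    forall (L : R) (alpha : R -> X), 0 < L ->
      is_rough_circle d Rr L alpha -> almost_isometric d K L alpha -> L <= M.

(** Ultrafilters on nat, given by their family of large sets. *)
Definition ultrafilter (U : (nat -> Prop) -> Prop) : Prop :=
  U (fun _ => True) /\
  ~ U (fun _ => False) /\
  (forall A B : nat -> Prop, U A -> (forall n, A n -> B n) -> U B) /\
  (forall A B : nat -> Prop, U A -> U B -> U (fun n => A n /\ B n)) /\
  (forall A : nat -> Prop, U A \/ U (fun n => ~ A n)).

Definition nonprincipal_ultrafilter (U : (nat -> Prop) -> Prop) : Prop :=
  ultrafilter U /\ forall k : nat, ~ U (fun n => n = k).

Definition tends_to_infinity (s : nat -> R) : Prop :=
  forall M : R, exists N : nat, forall m, (N <= m)%nat -> M <= s m.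

Definition is_ulim (U : (nat -> Prop) -> Prop) (a : nat -> R) (l : R) : Prop :=
  forall eps, 0 < eps -> U (fun m => Rabs (a m - l) < eps).

Definition ulim (U : (nat -> Prop) -> Prop) (a : nat -> R) : R :=
  epsilon (inhabits 0) (fun l => is_ulim U a l).

Section Cone.
Variables (X : Type) (d : X -> X -> R) (U : (nat -> Prop) -> Prop)
  (b : nat -> X) (s : nat -> R).

Definition cone_seq : Type :=
  { x : nat -> X | exists C : R, forall m, Rabs (d (x m) (b m) / s m) <= C }.

Definition cone_pdist (x y : cone_seq) : R :=
  ulim U (fun m => d (proj1_sig x m) (proj1_sig y m) / s m).

(** metric quotient: classes of sequences at pseudodistance 0 *)
Definition asymptotic_cone : Type :=
  { P : cone_seq -> Prop | exists x : cone_seq, P = (fun y => cone_pdist x y = 0) }.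

Definition cone_rep (P : asymptotic_cone) : cone_seq :=
  proj1_sig (constructive_indefinite_description _ (proj2_sig P)).

Definition cone_dist (P Q : asymptotic_cone) : R :=
  cone_pdist (cone_rep P) (cone_rep Q).
End Cone.

(* Main.v *)
Require Import Defs.
From Stdlib Require Import Reals Lra Lia ClassicalEpsilon Classical.
Open Scope R_scope.

Lemma abs_le x C : Rabs x <= C -> -C <= x <= C.
Proof. unfold Rabs; destruct Rcase_abs; lra. Qed.
Lemma abs_lt x C : Rabs x < C -> -C < x < C.
Proof. unfold Rabs; destruct Rcase_abs; lra. Qed.
Lemma abs_intro x C : -C <= x <= C -> Rabs x <= C.
Proof. unfold Rabs; destruct Rcase_abs; lra. Qed.

Section UF.
Variable U : (nat -> Prop) -> Prop.
Hypothesis hU : ultrafilter U.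

Lemma U_mono (A B : nat -> Prop) : U A -> (forall n, A n -> B n) -> U B.
Proof. destruct hU as (_ & _ & h & _). apply h. Qed.
Lemma U_and (A B : nat -> Prop) : U A -> U B -> U (fun n => A n /\ B n).
Proof. destruct hU as (_ & _ & _ & h & _). apply h. Qed.
Lemma U_all (A : nat -> Prop) : (forall n, A n) -> U A.
Proof. intros H. destruct hU as (h & _). apply (U_mono _ _ h). auto. Qed.
Lemma U_ne (A : nat -> Prop) : U A -> exists n, A n.
Proof. intros H. apply NNPP; intro Hn. destruct hU as (_ & h & _). apply h.
  apply (U_mono _ _ H). intros n Hn'. apply Hn. eauto. Qed.
Lemma U_not (A : nat -> Prop) : ~ U A -> U (fun n => ~ A n).
Proof. intros H. destruct hU as (_ & _ & _ & _ & h). destruct (h A); tauto. Qed.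

Lemma U_forall_lt (N : nat) (A : nat -> nat -> Prop) :
  (forall i, (i < N)%nat -> U (A i)) -> U (fun m => forall i, (i < N)%nat -> A i m).
Proof.
  induction N; intros H.
  - apply U_all. intros; lia.
  - assert (H1 := IHN (fun i Hi => H i ltac:(lia))).
    assert (H2 := H N ltac:(lia)).
    apply (U_mono _ _ (U_and _ _ H1 H2)). intros m [Ha Hb] i Hi.
    destruct (Nat.eq_dec i N). subst; auto. apply Ha; lia.
Qed.

Lemma ulim_exists (a : nat -> R) (C : R) : (forall m, Rabs (a m) <= C) ->
  exists l, is_ulim U a l.
Proof.
  intros HC.
  set (E := fun t => U (fun m => t <= a m)).
  assert (HE : E (- C)).
  { apply U_all. intros m. specialize (HC m). apply abs_le in HC. lra. }
  assert (Hb : bound E).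
  { exists C. intros t Ht. destruct (Rle_dec t C) as [|Hn]; auto.
    destruct (U_ne _ Ht) as [m Hm]. specialize (HC m). apply abs_le in HC. lra. }
  destruct (completeness E Hb (ex_intro _ _ HE)) as [l [Hub Hlub]].
  exists l. intros eps Heps.
  assert (H1 : exists t, E t /\ l - eps/2 < t).
  { apply NNPP; intro Hn. assert (l <= l - eps/2); [|lra].
    apply Hlub. intros t Ht. destruct (Rle_dec t (l - eps/2)); auto.
    exfalso; apply Hn; exists t; split; auto; lra. }
  destruct H1 as [t [Ht Htl]].
  assert (H2 : ~ E (l + eps/2)).
  { intro H. specialize (Hub _ H). lra. }
  apply U_not in H2.
  apply (U_mono _ _ (U_and _ _ Ht H2)). intros m [Ha Hb'].
  apply Rabs_def1; lra.
Qed.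

Lemma ulim_spec (a : nat -> R) (C : R) : (forall m, Rabs (a m) <= C) ->
  is_ulim U a (ulim U a).
Proof. intros H. unfold ulim. apply epsilon_spec. eapply ulim_exists; eauto. Qed.

End UF.

Lemma abs_intro' x C : -C <= x <= C -> Rabs x <= C.
Proof. unfold Rabs; destruct Rcase_abs; lra. Qed.

Section Build.
Variables (X : Type) (d : X -> X -> R) (Rr : R).
Hypothesis hmetric : is_metric d.
Hypothesis hR : 0 <= Rr.
Variable G : X -> X -> R -> X.
Hypothesis hG : forall x1 x2, G x1 x2 0 = x1 /\ G x1 x2 (d x1 x2) = x2 /\
    forall s t, 0 <= s <= d x1 x2 -> 0 <= t <= d x1 x2 ->
      Rabs (d (G x1 x2 s) (G x1 x2 t) - Rabs (s - t)) <= Rr.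
Variable n : nat.
Hypothesis hn : (0 < n)%nat.
Variable x : nat -> X.
Hypothesis hper : forall j, x (j + n)%nat = x j.

Lemma d_nonneg a c : 0 <= d a c. Proof. apply hmetric. Qed.
Lemma d_refl a : d a a = 0. Proof. apply hmetric; auto. Qed.
Lemma d_sym a c : d a c = d c a. Proof. apply hmetric. Qed.
Lemma d_tri a c e : d a e <= d a c + d c e. Proof. apply hmetric. Qed.

Definition len j := d (x j) (x (S j)).
Fixpoint P (i : nat) : R := match i with O => 0 | S i => P i + (len i + Rr) end.
Definition Lam := P n.

Lemma P_step i : P (S i) = P i + len i + Rr. Proof. simpl; ring. Qed.
Lemma P_mono_k a k : P a <= P (a + k).
Proof. induction k. rewrite Nat.add_0_r; lra. rewrite Nat.add_succ_r, P_step.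
  pose proof (d_nonneg (x (a+k)%nat) (x (S (a+k)))). unfold len. lra. Qed.
Lemma P_mono a c : (a <= c)%nat -> P a <= P c.
Proof. intros H. replace c with (a + (c - a))%nat by lia. apply P_mono_k. Qed.

Lemma len_per j : len (j + n) = len j.
Proof. unfold len. rewrite hper. replace (S (j+n)) with (S j + n)%nat by lia. now rewrite hper. Qed.
Lemma P_shift a : P (a + n) = P a + Lam.
Proof. induction a. simpl. unfold Lam; ring. simpl. rewrite IHa, len_per. ring. Qed.

Lemma chain_k a k : d (x a) (x (a + k)%nat) <= P (a + k) - P a.
Proof. induction k. rewrite Nat.add_0_r, d_refl; lra.
  rewrite Nat.add_succ_r, P_step. pose proof (d_tri (x a) (x (a+k)%nat) (x (S (a+k)))).
  unfold len. lra. Qed.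
Lemma chain a c : (a <= c)%nat -> d (x a) (x c) <= P c - P a.
Proof. intros H. replace c with (a + (c - a))%nat by lia. apply chain_k. Qed.

Definition piece (i : nat) (t : R) : X :=
  if Rlt_dec t (P i + Rr) then x i else G (x i) (x (S i)) (t - P i - Rr).

Definition inpiece i t := P i <= t < P (S i).

Lemma Gle x1 x2 s t : 0 <= s <= d x1 x2 -> 0 <= t <= d x1 x2 ->
  d (G x1 x2 s) (G x1 x2 t) <= Rabs (s - t) + Rr.
Proof. intros. destruct (hG x1 x2) as (_ & _ & h). specialize (h s t H H0).
  apply abs_le in h. lra. Qed.

Lemma E1 i t : inpiece i t -> d (piece i t) (x i) <= t - P i.
Proof. unfold inpiece, piece; rewrite P_step; intros [H1 H2]. fold (len i) in *.
  destruct (Rlt_dec t (P i + Rr)). rewrite d_refl; lra.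
  destruct (hG (x i) (x (S i))) as (h0 & _ & _).
  rewrite <- h0 at 2. eapply Rle_trans. apply Gle; unfold len in *; lra.
  rewrite Rminus_0_r, Rabs_right; lra. Qed.

Lemma E2 i t : inpiece i t -> d (piece i t) (x (S i)) <= P (S i) - t + Rr.
Proof. unfold inpiece, piece; rewrite P_step; intros [H1 H2].
  destruct (Rlt_dec t (P i + Rr)). unfold len; lra.
  destruct (hG (x i) (x (S i))) as (_ & h1 & _).
  rewrite <- h1 at 2. eapply Rle_trans. apply Gle; unfold len in *; lra.
  rewrite Rabs_left1; unfold len in *; lra. Qed.

Lemma E3 i p q : inpiece i p -> inpiece i q -> d (piece i p) (piece i q) <= Rabs (p - q) + Rr.
Proof. unfold inpiece, piece; rewrite P_step; intros [H1 H2] [H3 H4].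
  destruct (hG (x i) (x (S i))) as (h0 & _ & _).
  pose proof (Rle_abs (p - q)). pose proof (Rle_abs (-(p - q))). rewrite Rabs_Ropp in H0.
  destruct (Rlt_dec p (P i + Rr)); destruct (Rlt_dec q (P i + Rr)).
  - rewrite d_refl. pose proof (Rabs_pos (p - q)). lra.
  - rewrite <- h0 at 1. eapply Rle_trans. apply Gle; unfold len in *; lra.
    rewrite Rminus_0_l, Rabs_Ropp, Rabs_right; lra.
  - rewrite <- h0 at 2. eapply Rle_trans. apply Gle; unfold len in *; lra.
    rewrite Rminus_0_r, Rabs_right; lra.
  - eapply Rle_trans. apply Gle; unfold len in *; lra.
    replace (p - P i - Rr - (q - P i - Rr)) with (p - q) by ring. lra.
Qed.

Lemma fwd i j t u : (i < j)%nat -> inpiece i t -> inpiece j u ->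
  d (piece i t) (piece j u) <= u - t + Rr.
Proof. intros Hij Ht Hu. pose proof (E2 i t Ht). pose proof (E1 j u Hu).
  pose proof (chain (S i) j Hij).
  pose proof (d_tri (piece i t) (x (S i)) (piece j u)).
  pose proof (d_tri (x (S i)) (x j) (piece j u)) as T. rewrite (d_sym (x j)) in T. lra. Qed.

Lemma piece_shift i t : piece (i + n) (t + Lam) = piece i t.
Proof. unfold piece. rewrite P_shift, hper. replace (S (i + n)) with (S i + n)%nat by lia.
  rewrite hper. destruct (Rlt_dec (t + Lam) (P i + Lam + Rr)); destruct (Rlt_dec t (P i + Rr));
  try lra; auto. f_equal; ring. Qed.

Lemma inpiece_shift i t : inpiece i t -> inpiece (i + n) (t + Lam).
Proof. unfold inpiece. replace (S (i+n)) with (S i + n)%nat by lia. rewrite !P_shift. lra. Qed.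

Lemma find_piece N t : 0 <= t < P N -> exists i, (i < N)%nat /\ inpiece i t.
Proof. induction N; intros H. simpl in H; lra.
  destruct (Rlt_dec t (P N)). destruct IHN as [i [? ?]]. lra. exists i; split; auto.
  exists N; split; auto. unfold inpiece; lra. Qed.

Lemma inpiece_uniq i j t : inpiece i t -> inpiece j t -> i = j.
Proof. unfold inpiece; intros. destruct (Nat.lt_trichotomy i j) as [h|[h|h]]; auto.
  pose proof (P_mono (S i) j h); lra. pose proof (P_mono (S j) i h); lra. Qed.

Definition idx t := epsilon (inhabits 0%nat) (fun i => (i < n)%nat /\ inpiece i t).
Definition beta t := piece (idx t) t.

Lemma idx_spec t : 0 <= t < Lam -> (idx t < n)%nat /\ inpiece (idx t) t.
Proof. intros H. unfold idx. apply epsilon_spec. apply find_piece. exact H. Qed.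

Lemma circ_le p q : 0 <= p <= q -> q < Lam ->
  d (beta p) (beta q) <= q - p + Rr /\ d (beta p) (beta q) <= Lam - (q - p) + Rr.
Proof.
  intros Hp Hq. destruct (idx_spec p ltac:(lra)) as [Hi Hpi].
  destruct (idx_spec q ltac:(lra)) as [Hj Hqj]. unfold beta.
  set (i := idx p) in *. set (j := idx q) in *.
  assert (Hle : (i <= j)%nat).
  { destruct (Nat.le_gt_cases i j) as [l|l]; auto. unfold inpiece in *. pose proof (P_mono (S j) i l). lra. }
  assert (Hb : d (piece i p) (piece j q) <= Lam - (q - p) + Rr).
  { rewrite <- (piece_shift i p). rewrite d_sym. eapply Rle_trans.
    apply fwd. lia. exact Hqj. apply inpiece_shift; auto. lra. }
  split; auto.
  destruct (Nat.eq_dec i j) as [e|ne].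
  - rewrite <- e in *. eapply Rle_trans. apply E3; auto. rewrite Rabs_left1; lra.
  - apply fwd; auto; lia.
Qed.

Lemma circ_dist_sym L p q : circle_dist L p q = circle_dist L q p.
Proof. unfold circle_dist. now rewrite Rabs_minus_sym. Qed.

Lemma beta_rough : is_rough_circle d Rr Lam beta.
Proof.
  intros p q Hp Hq. unfold on_circle in *. unfold circle_dist.
  destruct (Rle_dec p q).
  - destruct (circ_le p q) as [h1 h2]; try lra.
    rewrite Rabs_left1 by lra. assert (d (beta p) (beta q) - Rr <= Rmin (- (p - q)) (Lam - - (p - q))); [|lra].
    apply Rmin_glb; lra.
  - destruct (circ_le q p) as [h1 h2]; try lra. rewrite d_sym.
    rewrite Rabs_right by lra. assert (d (beta q) (beta p) - Rr <= Rmin (p - q) (Lam - (p - q))); [|lra].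
    apply Rmin_glb; lra.
Qed.

Section Iso.
Variables (h : nat) (lmax A : R).
Hypothesis hnh : n = (h + h)%nat.
Hypothesis hl : forall j, len j <= lmax.
Hypothesis hA : forall a, A <= d (x a) (x (a + h)%nat).
Let H := INR h * (lmax + Rr).

Lemma P_inc_k a k : P (a + k) - P a <= INR k * (lmax + Rr).
Proof. induction k. rewrite Nat.add_0_r; simpl; lra.
  rewrite Nat.add_succ_r, P_step, S_INR. specialize (hl (a + k)%nat). lra. Qed.

Lemma half a : A <= P (a + h) - P a <= H.
Proof. split. eapply Rle_trans. apply hA. apply chain; lia. apply P_inc_k. Qed.

Lemma half2 a : P (a + h) - P a + (P (a + h + h) - P (a + h)) = Lam.
Proof. replace (a + h + h)%nat with (a + n)%nat by lia. rewrite P_shift. ring. Qed.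

Lemma Lam_bounds : 2 * A <= Lam <= 2 * H.
Proof. pose proof (half 0). pose proof (half (0 + h)). pose proof (half2 0). lra. Qed.

Lemma core i k t u : inpiece i t -> inpiece k u -> u - t = Lam / 2 ->
  A - 4 * (lmax + Rr) - (H - A) <= d (piece i t) (piece k u).
Proof.
  intros Ht Hu Hut.
  pose proof (E1 i t Ht) as e1. pose proof (E1 k u Hu) as e2.
  unfold inpiece in *. rewrite P_step in Ht, Hu. pose proof (hl i). pose proof (hl k).
  pose proof (half i). pose proof (half (i + h)). pose proof (half2 i).
  pose proof (hA i) as ha.
  pose proof (d_tri (x i) (piece i t) (x k)) as T1.
  pose proof (d_tri (piece i t) (piece k u) (x k)) as T2.
  pose proof (d_tri (x i) (x k) (x (i + h)%nat)) as T3.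
  rewrite (d_sym (x i) (piece i t)) in T1.
  assert (C : d (x k) (x (i + h)%nat) <= Rabs (P k - P (i + h))).
  { destruct (Nat.le_gt_cases k (i + h)) as [l|l].
    - eapply Rle_trans. apply chain; auto. rewrite Rabs_minus_sym. apply Rle_abs.
    - rewrite d_sym. eapply Rle_trans. apply chain; lia. apply Rle_abs. }
  assert (C2 : Rabs (P k - P (i + h)) <= 2 * (lmax + Rr) + (H - A) / 2).
  { apply abs_intro'. lra. }
  lra.
Qed.

Lemma beta_iso t : 0 < Lam -> 0 <= t < Lam ->
  A - 4 * (lmax + Rr) - (H - A) <= d (beta t) (beta (antipode Lam t)).
Proof.
  intros HL Ht. destruct (idx_spec t Ht) as [_ Hi]. unfold beta at 1.
  unfold antipode. destruct (Rlt_dec t (Lam / 2)).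
  - destruct (idx_spec (t + Lam/2) ltac:(lra)) as [_ Hk]. unfold beta.
    apply core; auto. ring.
  - destruct (idx_spec (t - Lam/2) ltac:(lra)) as [_ Hk]. unfold beta.
    rewrite <- (piece_shift (idx (t - Lam / 2))). apply core; [exact Hi | apply inpiece_shift; exact Hk | lra].
Qed.
End Iso.
End Build.

Lemma mod_half a h : (0 < h)%nat ->
  ((a mod (h+h) < h)%nat /\ (a + h) mod (h+h) = (a mod (h+h) + h)%nat) \/
  ((h <= a mod (h+h))%nat /\ (a + h) mod (h+h) = (a mod (h+h) - h)%nat).
Proof.
  intros Hh. pose proof (Nat.div_mod_eq a (h+h)). pose proof (Nat.mod_upper_bound a (h+h) ltac:(lia)).
  set (q := (a / (h+h))%nat) in *. set (r := (a mod (h+h))%nat) in *.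
  destruct (Nat.lt_ge_cases r h).
  - left; split; auto. symmetry. apply Nat.mod_unique with q; lia.
  - right; split; auto. symmetry. apply Nat.mod_unique with (S q). lia. nia.
Qed.

Lemma mod_next j n : (0 < n)%nat ->
  ((S (j mod n) < n)%nat /\ (S j) mod n = S (j mod n)) \/
  (S (j mod n) = n /\ (S j) mod n = 0%nat).
Proof.
  intros Hn. pose proof (Nat.div_mod_eq j n). pose proof (Nat.mod_upper_bound j n ltac:(lia)).
  set (q := (j / n)%nat) in *. set (r := (j mod n)%nat) in *.
  destruct (Nat.lt_ge_cases (S r) n).
  - left; split; auto. symmetry. apply Nat.mod_unique with q; lia.
  - right; split; [lia|]. symmetry. apply Nat.mod_unique with (S q). lia. nia.
Qed.

Lemma div_close y S D eps : 0 < S -> Rabs (y / S - D) < eps -> S * (D - eps) <= y <= S * (D + eps).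
Proof.
  intros HS H. unfold Rabs in H. destruct Rcase_abs in H.
  - assert (y / S > D - eps) by lra. split.
    + apply Rlt_le. apply (Rmult_lt_compat_l S) in H0; auto. unfold Rdiv in H0.
      rewrite <- Rmult_assoc, (Rmult_comm S y), Rmult_assoc, Rinv_r, Rmult_1_r in H0; lra.
    + assert (y / S <= D + eps) by lra. apply (Rmult_le_compat_l S) in H1; [|lra].
      unfold Rdiv in H1. rewrite <- Rmult_assoc, (Rmult_comm S y), Rmult_assoc, Rinv_r, Rmult_1_r in H1; lra.
  - assert (y / S < D + eps) by lra. assert (y / S >= D - eps) by lra. split.
    + apply Rge_le in H1. apply (Rmult_le_compat_l S) in H1; [|lra].
      unfold Rdiv in H1. rewrite <- Rmult_assoc, (Rmult_comm S y), Rmult_assoc, Rinv_r, Rmult_1_r in H1; lra.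
    + apply Rlt_le. apply (Rmult_lt_compat_l S) in H0; auto. unfold Rdiv in H0.
      rewrite <- Rmult_assoc, (Rmult_comm S y), Rmult_assoc, Rinv_r, Rmult_1_r in H0; lra.
Qed.

Lemma U_tail U (hU : nonprincipal_ultrafilter U) N : U (fun m => (N <= m)%nat).
Proof.
  destruct hU as [[hT [hF [hM [hA hD]]]] hnp].
  assert (H : ~ U (fun m => (m < N)%nat)).
  { induction N; intro H.
    - apply hF. apply (hM _ _ H). intros; lia.
    - destruct (hD (fun m => m = N)) as [h|h]. eapply hnp; eauto.
      apply IHN. apply (hM _ _ (hA _ _ H h)). intros m [h1 h2]. lia. }
  destruct (hD (fun m => (m < N)%nat)) as [h|h]. tauto.
  apply (hM _ _ h). intros; lia.
Qed.

Lemma div_bound (a b0 e s0 C1 C2 : R) : 0 <= a -> 0 <= b0 -> 0 <= e -> a <= b0 + e ->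
  Rabs (b0 / s0) <= C1 -> Rabs (e / s0) <= C2 -> Rabs (a / s0) <= C1 + C2.
Proof.
  intros. unfold Rdiv in *. rewrite Rabs_mult, Rabs_inv in *.
  rewrite (Rabs_right a), (Rabs_right b0), (Rabs_right e) in * by lra.
  assert (0 <= / Rabs s0).
  { destruct (Req_dec (Rabs s0) 0) as [z|z]. rewrite z, Rinv_0; lra.
    left; apply Rinv_0_lt_compat. pose proof (Rabs_pos s0); lra. }
  apply Rmult_le_compat_r with (r := / Rabs s0) in H2; auto. nra.
Qed.

Lemma div_nonneg a b : 0 <= a -> 0 < b -> 0 <= a / b.
Proof. intros. unfold Rdiv; apply Rmult_le_pos; auto. left; apply Rinv_0_lt_compat; auto. Qed.


Theorem corollary3p12 (X : Type) (d : X -> X -> R) (Rr : R)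
  (hmetric : is_metric d) (hR : 0 <= Rr)
  (hgeod : rough_geodesic d Rr) (hss : strongly_shortcut d Rr)
  (U : (nat -> Prop) -> Prop) (hU : nonprincipal_ultrafilter U)
  (b : nat -> X) (s : nat -> R) (hs : tends_to_infinity s) :
  strongly_shortcut (@cone_dist X d U b s) 0.
Proof.
  destruct hss as [K [HK [M HM]]].
  set (c := / K).
  assert (Hc : 0 < c < 1).
  { unfold c. split. apply Rinv_0_lt_compat; lra. rewrite <- Rinv_1. apply Rinv_lt_contravar; lra. }
  exists (4 / (3 + c)). split.
  { apply (Rmult_lt_reg_r (3 + c)). lra. unfold Rdiv. rewrite Rmult_assoc, Rinv_l by lra. lra. }
  exists 0. intros L alpha HL Hcirc Hiso. exfalso.
  destruct (archimed_cor1 ((1 - c) / 64) ltac:(lra)) as [h [Hh1 Hh0]].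
  set (n := (h + h)%nat).
  assert (Hn : (0 < n)%nat) by (unfold n; lia).
  set (hh := INR h).
  assert (Hhh : 1 <= hh) by (unfold hh; apply (le_INR 1); lia).
  assert (HnR : INR n = 2 * hh) by (unfold n, hh; rewrite plus_INR; ring).
  set (eps := L * (1 - c) / (16 * (2 * hh + 6))).
  assert (Heps : 0 < eps) by (unfold eps; apply Rdiv_lt_0_compat; nra).
  assert (Heps2 : eps * (2 * hh + 6) = L * (1 - c) / 16) by (unfold eps; field; lra).
  set (g := L * (1 - c) / 8).
  assert (Hg : 0 < g) by (unfold g; nra).
  set (S0 := (2 * hh + 4) * Rr / g + 2 * Rabs M / L + 1).
  set (pts := fun r : nat => alpha (INR r * L / INR n)).
  set (rep := fun P : @asymptotic_cone X d U b s => proj1_sig (@cone_rep X d U b s P)).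
  assert (Hbd : forall P Q, exists C, forall m, Rabs (d (rep P m) (rep Q m) / s m) <= C).
  { intros P Q. destruct (proj2_sig (@cone_rep X d U b s P)) as [C1 H1].
    destruct (proj2_sig (@cone_rep X d U b s Q)) as [C2 H2].
    exists (C1 + C2). intros m. unfold rep.
    apply (div_bound _ (d (proj1_sig (@cone_rep X d U b s P) m) (b m)) (d (proj1_sig (@cone_rep X d U b s Q) m) (b m))).
    - apply hmetric.
    - apply hmetric.
    - apply hmetric.
    - eapply Rle_trans. apply hmetric with (y := b m). rewrite (proj1 (proj2 (proj2 hmetric)) (b m)). lra.
    - apply H1.
    - apply H2. }
  assert (Hclose : forall r r', U (fun m => Rabs (d (rep (pts r) m) (rep (pts r') m) / s m
                     - @cone_dist X d U b s (pts r) (pts r')) < eps)).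
  { intros r r'. destruct (Hbd (pts r) (pts r')) as [C HC].
    apply (ulim_spec U (proj1 hU) _ C HC). exact Heps. }
  assert (Hall := U_forall_lt U (proj1 hU) n _ (fun r _ =>
     U_forall_lt U (proj1 hU) n _ (fun r' _ => Hclose r r'))).
  destruct (hs S0) as [N HN].
  destruct (U_ne U (proj1 hU) _ (U_and U (proj1 hU) _ _ Hall (U_tail U hU N))) as [m [Hm HmN]].
  apply HN in HmN. clear HN Hall Hclose.
  set (Sm := s m) in *.
  assert (HS0 : 0 < S0).
  { unfold S0. assert (0 <= (2 * hh + 4) * Rr / g) by (apply div_nonneg; nra).
    assert (0 <= 2 * Rabs M / L) by (apply div_nonneg; [pose proof (Rabs_pos M)|]; lra). lra. }
  assert (HS : 0 < Sm) by lra.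
  set (G := fun x1 x2 => proj1_sig (constructive_indefinite_description _ (hgeod x1 x2))).
  assert (hG : forall x1 x2, G x1 x2 0 = x1 /\ G x1 x2 (d x1 x2) = x2 /\
    forall s t, 0 <= s <= d x1 x2 -> 0 <= t <= d x1 x2 ->
      Rabs (d (G x1 x2 s) (G x1 x2 t) - Rabs (s - t)) <= Rr).
  { intros x1 x2. exact (proj2_sig (constructive_indefinite_description _ (hgeod x1 x2))). }
  set (x := fun j => rep (pts (j mod n)%nat) m).
  assert (hper : forall j, x (j + n)%nat = x j).
  { intros j. unfold x. replace ((j + n) mod n)%nat with (j mod n)%nat; auto.
    replace (j + n)%nat with (j + 1 * n)%nat by lia. symmetry; apply Nat.Div0.mod_add. }
  set (lmax := Sm * (L / INR n + eps)).
  set (A := Sm * ((3 + c) * L / 8 - eps)).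
  assert (Hmodlt : forall j, (j mod n < n)%nat) by (intros; apply Nat.mod_upper_bound; lia).
  assert (Hoc : forall r, (r < n)%nat -> on_circle L (INR r * L / INR n)).
  { intros r Hr. unfold on_circle. apply lt_INR in Hr. rewrite HnR in *. split.
    apply Rmult_le_pos. apply Rmult_le_pos; [apply pos_INR | lra]. left; apply Rinv_0_lt_compat; lra.
    apply (Rmult_lt_reg_r (2 * hh)). lra. unfold Rdiv. rewrite Rmult_assoc, Rinv_l by lra. nra. }
  assert (hl : forall j, len X d x j <= lmax).
  { intros j. unfold len, x.
    set (r := (j mod n)%nat). set (r2 := ((S j) mod n)%nat).
    assert (HD : @cone_dist X d U b s (pts r) (pts r2) <= L / INR n).
    { eapply Rle_trans. apply Hcirc. apply Hoc, Hmodlt. apply Hoc, Hmodlt.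
      rewrite Rplus_0_r. unfold circle_dist. rewrite HnR.
      destruct (mod_next j n Hn) as [[h1 h2]|[h1 h2]]; fold r r2 in h1, h2; rewrite h2.
      - eapply Rle_trans. apply Rmin_l. rewrite S_INR.
        replace (INR r * L / (2 * hh) - (INR r + 1) * L / (2 * hh)) with (- (L / (2 * hh))) by (field; lra).
        rewrite Rabs_Ropp, Rabs_right. lra. apply Rle_ge, div_nonneg; lra.
      - eapply Rle_trans. apply Rmin_r. simpl INR.
        assert (INR r = 2 * hh - 1) by (rewrite <- HnR, <- h1, S_INR; ring).
        rewrite H. replace ((2 * hh - 1) * L / (2 * hh) - 0 * L / (2 * hh)) with (L - L / (2 * hh)) by (field; lra).
        rewrite Rabs_right. lra. assert (L / (2 * hh) <= L). { apply (Rmult_le_reg_r (2*hh)). lra.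
        unfold Rdiv. rewrite Rmult_assoc, Rinv_l by lra. nra. } lra. }
    specialize (Hm r (Hmodlt j) r2 (Hmodlt (S j))).
    apply div_close in Hm; auto. unfold lmax. nra. }
  assert (hA : forall a, A <= d (x a) (x (a + h)%nat)).
  { intros a. unfold x.
    set (r := (a mod n)%nat). set (r2 := ((a + h) mod n)%nat).
    assert (HD : (3 + c) * L / 8 <= @cone_dist X d U b s (pts r) (pts r2)).
    { specialize (Hiso _ (Hoc r (Hmodlt a))). apply Rge_le in Hiso.
      replace (1 / (4 / (3 + c)) * (L / 2)) with ((3 + c) * L / 8) in Hiso by (field; lra).
      eapply Rle_trans. apply Hiso. right. unfold pts. f_equal. f_equal.
      unfold antipode. rewrite HnR.
      assert (h0 : (0 < h)%nat) by lia.
      destruct (mod_half a h h0) as [[h1 h2]|[h1 h2]]; fold n r r2 in h1, h2; rewrite h2.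
      - apply lt_INR in h1. fold hh in h1. destruct (Rlt_dec (INR r * L / (2 * hh)) (L / 2)) as [_|Hn'].
        rewrite plus_INR. fold hh. field; lra.
        exfalso; apply Hn'. apply (Rmult_lt_reg_r (2 * hh)). lra. unfold Rdiv. rewrite Rmult_assoc, Rinv_l by lra. nra.
      - pose proof h1 as h1n. apply le_INR in h1. fold hh in h1. destruct (Rlt_dec (INR r * L / (2 * hh)) (L / 2)) as [Hn'|_].
        exfalso. apply (Rmult_lt_compat_r (2 * hh)) in Hn'. unfold Rdiv in Hn'. rewrite Rmult_assoc, Rinv_l in Hn' by lra. nra. lra.
        rewrite minus_INR by exact h1n. fold hh. field; lra. }
    specialize (Hm r (Hmodlt a) r2 (Hmodlt (a + h)%nat)).
    apply div_close in Hm; auto. unfold A. nra. }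
  set (Lm := Lam X d Rr n x).
  destruct (Lam_bounds X d Rr hmetric hR n Hn x hper h lmax A eq_refl hl hA) as [LB UB].
  fold Lm in LB, UB.
  assert (Hq : hh * / hh = 1) by (field; lra).
  assert (Hlm : lmax = Sm * (L * / hh / 2 + eps)) by (unfold lmax; rewrite HnR; field; lra).
  assert (HA2 : 2 * A >= Sm * L / 2).
  { unfold A. assert (eps <= L / 96).
    { assert (eps * 6 <= L / 16) by nra. lra. }
    assert (0 <= Sm * ((1 + c) * L / 4 - 2 * eps)) by (apply Rmult_le_pos; nra). nra. }
  assert (HSM : Sm * L / 2 > M).
  { assert (Sm >= 2 * Rabs M / L + 1).
    { unfold S0 in HmN. assert (0 <= (2 * hh + 4) * Rr / g) by (apply div_nonneg; nra). lra. }
    assert (Sm * L >= 2 * Rabs M + L).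
    { replace (2 * Rabs M + L) with ((2 * Rabs M / L + 1) * L) by (field; lra). nra. }
    pose proof (Rle_abs M). lra. }
  assert (HLpos : 0 < Lm) by nra.
  assert (HLM : Lm <= M).
  { apply (HM Lm (beta X d Rr G n x) HLpos).
    - apply (beta_rough X d Rr hmetric hR G hG n Hn x hper).
    - intros t Ht. apply Rle_ge.
      eapply Rle_trans; [| apply (beta_iso X d Rr hmetric hR G hG n Hn x hper h lmax A eq_refl hl hA t HLpos Ht)].
      fold hh. fold c. fold Lm.
      assert (HSg : Sm * g >= (2 * hh + 4) * Rr).
      { assert (Sm >= (2 * hh + 4) * Rr / g).
        { unfold S0 in HmN. assert (0 <= 2 * Rabs M / L) by (apply div_nonneg; [pose proof (Rabs_pos M)|]; lra). lra. }
        replace ((2 * hh + 4) * Rr) with ((2 * hh + 4) * Rr / g * g) by (field; lra). nra. }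
      assert (Hq2 : / hh < (1 - c) / 64) by exact Hh1.
      assert (Hqp : 0 < / hh) by (apply Rinv_0_lt_compat; lra).
      set (q := / hh) in *.
      assert (B1 : 2 * L * q <= L * (1 - c) / 32) by nra.
      assert (B2 : (6 + (1 + c) * hh) * eps <= L * (1 - c) / 16) by nra.
      assert (Bb : Sm * (L * (1 - c) / 4 - 2 * L * q - (6 + (1 + c) * hh) * eps) >= Sm * g) by (unfold g in *; nra).
      assert (Hkey : c * (hh * (lmax + Rr)) <= A - 4 * (lmax + Rr) - (hh * (lmax + Rr) - A)).
      { assert (E : A - 4 * (lmax + Rr) - (hh * (lmax + Rr) - A) - c * (hh * (lmax + Rr)) =
                    Sm * (L * (1 - c) / 4 - 2 * L * q - (6 + (1 + c) * hh) * eps) - ((1 + c) * hh + 4) * Rr).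
        { assert (E1 : hh * lmax = Sm * (L / 2 + hh * eps)) by (unfold lmax; rewrite HnR; field; lra).
          replace (A - 4 * (lmax + Rr) - (hh * (lmax + Rr) - A) - c * (hh * (lmax + Rr))) with
            (2 * A - 4 * lmax - 4 * Rr - (1 + c) * (hh * lmax) - (1 + c) * hh * Rr) by ring.
          rewrite E1, Hlm. unfold A. field. }
        assert (((1 + c) * hh + 4) * Rr <= (2 * hh + 4) * Rr) by nra.
        lra. }
      assert (1 / K = c) by (unfold c; field; lra).
      rewrite H. fold hh in UB. assert (c * (Lm / 2) <= c * (hh * (lmax + Rr))) by (apply Rmult_le_compat_l; lra). lra.
  }
  lra.
Qed.
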